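(* Let $n\ge 3$ and let $M\in\mathbb{R}^{n\times n}$ be a nonnegative irreducible matrix. Then (i) $\lim_{\ell\to\infty}\mathcal{E}^\ell(M)=\mathcal{E}(M)$ (entrywise); and (ii) the sequence $(\mathcal{E}^\ell(M))_{\ell\ge 1}$ is entrywise nondecreasing: $\mathcal{E}^\ell(M)\le\mathcal{E}^{\ell+1}(M)$ entrywise for every $\ell\ge 1$.
   Context: Let $N=\{1,\dots,n\}$ and let $G$ be the directed graph on $N$ with an edge $i\to j$ iff $m_{ij}>0$ (strongly connected since $M$ is irreducible); $\delta_{ij}$ is the directed graph distance from $i$ to $j$ in $G$ ($\delta_{ii}=0$). For $M_{RC}$ the submatrix with rows in $R$ and columns in $C$, $\bar S=N\setminus S$, and $\rho(M)$ the spectral radius, the isoradial reduction is $\mathcal{I}_S(M)=M_{SS}-M_{S\bar S}(M_{\bar S\bar S}-\rho(M)I)^{-1}M_{\bar S S}$ (rows/columns indexed by $S$), and the effective transition matrix is $\mathcal{E}(M)=[\varepsilon_{ij}]$ with $\varepsilon_{ij}=\mathcal{I}_{\{i,j\}}(M)_{ij}$ for $i\ne j$ and $\varepsilon_{ii}=\sum_{k\ne i}\mathcal{I}_{\{i,k\}}(M)_{ii}$. For $i\neq j$ and integer $\ell\ge1$ let $\Gamma^\ell_{ij}=\{k\in N:\delta_{ik}+\delta_{kj}\le\ell\text{ and }\delta_{jk}+\delta_{ki}\le\ell\}\cup\{i,j\}$, let $S=\{i,j\}$ and $\tilde S=\Gamma^\ell_{ij}\setminus S$. The $\ell$-step approximation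 is $$\mathcal{I}^\ell_S(M)=M_{SS}+\rho(M)^{-1}M_{S\tilde S}\Big(\sum_{k=0}^{\ell}\big(\rho(M)^{-1}M_{\tilde S\tilde S}\big)^k\Big)M_{\tilde S S}$$ (the second term being zero if $\tilde S=\emptyset$), with rows/columns indexed by $S$, and $\mathcal{E}^\ell(M)=[\varepsilon^\ell_{ij}]$ where $\varepsilon^\ell_{ij}=\mathcal{I}^\ell_{\{i,j\}}(M)_{ij}$ for $i\ne j$ and $\varepsilon^\ell_{ii}=\sum_{k\ne i}\mathcal{I}^\ell_{\{i,k\}}(M)_{ii}$. *)

(* Defs.v *)
From HB Require Import structures.
From mathcomp Require Import all_boot all_order all_algebra.
Set Implicit Arguments. Unset Strict Implicit. Unset Printing Implicit Defensive.
Import Order.TTheory GRing.Theory Num.Theory.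
Local Open Scope ring_scope.

Section Defs.
Variables (C : archiClosedFieldType) (n : nat).
Implicit Types (M : 'M[C]_n) (S T : {set 'I_n}).

Definition walk M (k : nat) (i j : 'I_n) : bool :=
  [exists f : {ffun 'I_k.+1 -> 'I_n},
     [&& f ord0 == i, f ord_max == j &
         [forall t : 'I_k, 0 < M (f (widen_ord (leqnSn k) t)) (f (lift ord0 t))]]].

Definition irreducible M : Prop := forall i j : 'I_n, exists k, walk M k i j.

(* directed graph distance: least k with a walk of length k (a shortest walk,
   when it exists, has length < n; returns n if j is unreachable) *)
Definition dist M (i j : 'I_n) : nat := find (fun k => walk M k i j) (iota 0 n).

Definition spectral_radius M (rho : C) : Prop :=
  (exists2 l, eigenvalue M l & `|l| = rho) /\ (forall l, eigenvalue M l -> `|l| <= rho).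

(* submatrix M_{RT}, rows/columns of a set listed in increasing order *)
Definition subM M S T : 'M[C]_(#|S|, #|T|) :=
  \matrix_(a, b) M (enum_val a) (enum_val b).

Definition iso M (rho : C) S : 'M[C]_#|S| :=
  subM M S S - subM M S (~: S) *m invmx (subM M (~: S) (~: S) - rho%:M)
                *m subM M (~: S) S.

Definition Gamma M (l : nat) (i j : 'I_n) : {set 'I_n} :=
  [set k | ((dist M i k + dist M k j <= l)%N && (dist M j k + dist M k i <= l)%N)]
  :|: [set i; j].

Definition iso_l M (rho : C) (l : nat) (i j : 'I_n) : 'M[C]_#|[set i; j]| :=
  let S := [set i; j] in
  let St := Gamma M l i j :\: S in
  subM M S S + rho^-1 *: (subM M S St
     *m (\sum_(k < l.+1) (rho^-1 *: subM M St St) ^+ k) *m subM M St S).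

Definition at2 (i j a b : 'I_n) (Ha : a \in [set i; j]) (Hb : b \in [set i; j])
  (A : 'M[C]_#|[set i; j]|) : C := A (enum_rank_in Ha a) (enum_rank_in Hb b).

Definition eff M (rho : C) : 'M[C]_n :=
  \matrix_(i, j)
    if i == j then \sum_(k | k != i) at2 (set21 i k) (set21 i k) (iso M rho [set i; k])
    else at2 (set21 i j) (set22 i j) (iso M rho [set i; j]).

Definition eff_l M (rho : C) (l : nat) : 'M[C]_n :=
  \matrix_(i, j)
    if i == j then \sum_(k | k != i) at2 (set21 i k) (set21 i k) (iso_l M rho l i k)
    else at2 (set21 i j) (set22 i j) (iso_l M rho l i j).

End Defs.

(* Main.v *)
Require Import Defs.
From HB Require Import structures.
From mathcomp Require Import all_boot all_order all_algebra.
From mathcomp Require Import ring.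
Set Implicit Arguments. Unset Strict Implicit. Unset Printing Implicit Defensive.
Import Order.TTheory GRing.Theory Num.Theory.
Local Open Scope ring_scope.

Section Aux.
Variable C : archiClosedFieldType.

Lemma le_sum1 (I : finType) (f : I -> C) (i : I) :
  (forall j, 0 <= f j) -> f i <= \sum_j f j.
Proof.
move=> H; rewrite (bigD1 i) //= lerDl; apply: sumr_ge0 => j _; exact: H.
Qed.

Lemma L1 (m : nat) (A : 'M[C]_m) (R : C) : 0 < R ->
  (forall l, eigenvalue A l -> `|l| < R) ->
  exists K, 0 <= K /\ forall k a b, `|(A ^+ k) a b| <= K * R ^+ k.
Proof.
case: m A => [|m] A R0 Heig.
  by exists 0; split => // k [].
have [rs Hrs] := closed_field_poly_normal (char_poly A).
rewrite (monicP (char_poly_monic A)) scale1r in Hrs.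
have Hin : forall z, z \in rs -> `|z| < R.
  move=> z zin; apply: Heig; rewrite eigenvalue_root_char Hrs.
  by rewrite root_prod_XsubC.
suff: forall p, horner_mx A (p * \prod_(z <- rs) ('X - z%:P)) = 0 ->
  exists K, 0 <= K /\ forall k a b, `|(horner_mx A ('X^k * p)) a b| <= K * R ^+ k.
  move/(_ 1); rewrite mul1r -Hrs Cayley_Hamilton => /(_ erefl) [K [K0 HK]].
  exists K; split => // k a b; move: (HK k a b).
  by rewrite mulr1 rmorphXn /= horner_mx_X.
clear Hrs Heig; elim: rs Hin => [|z rs IH] Hin p.
  rewrite big_nil mulr1 => hp; exists 0; split => // k a b.
  by rewrite rmorphM /= hp mulr0 mxE normr0 mul0r.
rewrite big_cons mulrA => hp.
have [K' [K'0 HK']] := IH (fun w wi => Hin w (mem_behead (s:=z::rs) wi)) _ hp.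
have zR : `|z| < R by apply: Hin; rewrite inE eqxx.
set d := R - `|z|.
have d0 : 0 < d by rewrite subr_gt0.
set F := fun k => horner_mx A ('X^k * p).
set K0 := \sum_a \sum_b `|F 0%N a b|.
have K00 : 0 <= K0 by apply: sumr_ge0 => a _; apply: sumr_ge0 => b _.
exists (K0 + K' / d); split.
  by apply: addr_ge0 => //; apply: divr_ge0 => //; apply: ltW.
elim=> [|k IHk] a b.
  rewrite expr0 mulr1.
  have H1 : K0 <= K0 + K' / d by rewrite lerDl divr_ge0 // ltW.
  apply: le_trans H1.
  have H2 : `|F 0%N a b| <= \sum_b `|F 0%N a b| by apply: le_sum1.
  apply: le_trans H2 _.
  rewrite /K0; apply: (@le_sum1 _ (fun a0 => \sum_b0 `|F 0%N a0 b0|) a) => a'.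
  by apply: sumr_ge0.
have eqF : F k.+1 = horner_mx A ('X^k * (p * ('X - z%:P))) + z%:M * F k.
  rewrite /F -(horner_mx_C A) -rmorphM -rmorphD; congr (horner_mx A _).
  rewrite exprS; ring.
rewrite -/(F k.+1) eqF mxE [_ * F k]mul_scalar_mx mxE.
apply: le_trans (ler_normD _ _) _.
rewrite normrM.
apply: le_trans (lerD (HK' k a b) (ler_wpM2l (normr_ge0 z) (IHk a b))) _.
rewrite mulrA -mulrDl exprS mulrA [_ * R]mulrC.
apply: ler_wpM2r; first by apply: exprn_ge0; apply: ltW.
rewrite -subr_ge0.
have -> : R * (K0 + K' / d) - (K' + `|z| * (K0 + K' / d)) = d * K0.
  rewrite /d; field; exact: lt0r_neq0.
by apply: mulr_ge0 => //; apply: ltW.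
Qed.


Lemma sum_pos1 (I : finType) (f : I -> C) (i : I) :
  (forall j, 0 <= f j) -> 0 < f i -> 0 < \sum_j f j.
Proof. by move=> H Hi; apply: lt_le_trans Hi (le_sum1 _ H). Qed.

Lemma bound_exists (T : eqType) (P : T -> nat -> Prop) (s : seq T) :
  (forall x, exists k, P x k) ->
  exists N, forall x, x \in s -> exists2 k, (k <= N)%N & P x k.
Proof.
move=> H; elim: s => [|a s [N HN]]; first by exists 0%N.
have [ka Pa] := H a.
exists (maxn ka N) => x; rewrite inE => /orP [/eqP ->|xs].
  by exists ka => //; rewrite leq_maxl.
have [k kN Pk] := HN x xs; exists k => //; exact: leq_trans kN (leq_maxr _ _).
Qed.

Lemma bernoulli (h : C) (k : nat) : 0 <= h -> 1 + k%:R * h <= (1 + h) ^+ k.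
Proof.
move=> h0; elim: k => [|k IH]; first by rewrite mul0r addr0 expr0.
rewrite exprSr.
have H1 : (1 + k%:R * h) * (1 + h) <= (1 + h) ^+ k * (1 + h).
  by apply: ler_wpM2r => //; apply: addr_ge0.
apply: le_trans H1.
have -> : (1 + k%:R * h) * (1 + h) = 1 + k.+1%:R * h + k%:R * (h * h).
  by rewrite mulrSr; ring.
by rewrite lerDl; apply: mulr_ge0 => //; apply: mulr_ge0.
Qed.

Lemma growth (s c : C) : 1 < s -> 0 <= c -> exists k : nat, c < s ^+ k.
Proof.
move=> s1 c0; set h := s - 1.
have h0 : 0 < h by rewrite subr_gt0.
have cb := archi_boundP (divr_ge0 c0 (ltW h0)).
set k := Num.bound _ in cb.
exists k.
have -> : s = 1 + h by rewrite /h addrC subrK.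
apply: lt_le_trans (bernoulli k (ltW h0)).
rewrite ltr_pdivrMr // in cb.
by apply: lt_le_trans cb _; rewrite lerDr.
Qed.

Section PF.
Variables (n : nat) (M : 'M[C]_n).
Hypothesis M0 : forall i j, 0 <= M i j.

Lemma exp_ge0 k i j : 0 <= (M ^+ k) i j.
Proof.
elim: k i j => [|k IH] i j; first by rewrite expr0 mxE ler0n.
rewrite exprSr -mulmxE mxE; apply: sumr_ge0 => l _; exact: mulr_ge0.
Qed.

Lemma walk_pos k i j : walk M k i j -> 0 < (M ^+ k) i j.
Proof.
elim: k i j => [|k IH] i j.
  case/existsP => f /and3P [/eqP f0 /eqP f1 _].
  have -> : j = i by rewrite -f0 -f1; congr (f _); apply/val_inj.
  by rewrite expr0 mxE eqxx ltr01.
case/existsP => f /and3P [/eqP f0 /eqP f1 /forallP fe].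
pose g := [ffun t : 'I_k.+1 => f (lift ord0 t)].
have gw : walk M k (f (lift ord0 ord0)) j.
  apply/existsP; exists g; rewrite !ffunE eqxx /=.
  apply/andP; split.
    by rewrite -f1; apply/eqP; congr (f _); apply/val_inj.
  apply/forallP => t; rewrite !ffunE.
  have := fe (lift ord0 t).
  have -> : widen_ord (leqnSn k.+1) (lift ord0 t) = lift ord0 (widen_ord (leqnSn k) t).
    by apply/val_inj.
  done.
have Hi : 0 < M i (f (lift ord0 ord0)).
  have := fe ord0.
  have -> : widen_ord (leqnSn k.+1) ord0 = ord0 by apply/val_inj.
  by rewrite f0.
rewrite exprS -mulmxE mxE.
apply: (@sum_pos1 _ _ (f (lift ord0 ord0))).
  by move=> l; apply: mulr_ge0 => //; apply: exp_ge0.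
by apply: mulr_gt0 => //; apply: IH.
Qed.

Lemma Q_pos : irreducible M -> exists N, forall i j, 0 < (\sum_(k < N.+1) M ^+ k) i j.
Proof.
move=> Hirr.
have [N HN] := @bound_exists _ (fun (p : 'I_n * 'I_n) k => walk M k p.1 p.2) (enum [set: 'I_n * 'I_n])
  (fun p => Hirr p.1 p.2).
exists N => i j.
have [k kN Hk] := HN (i, j) ltac:(by rewrite mem_enum inE).
rewrite summxE.
apply: (@sum_pos1 _ _ (Ordinal (kN : (k < N.+1)%N))).
  by move=> l; apply: exp_ge0.
exact: walk_pos.
Qed.

Lemma Klem (rho mu : C) (x : 'rV[C]_n) : irreducible M ->
  (forall l, eigenvalue M l -> `|l| <= rho) -> 0 <= rho ->
  (forall c, 0 <= x 0 c) -> (exists c, x 0 c != 0) -> (exists r, x 0 r = 0) ->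
  0 <= mu -> (forall b, mu * x 0 b <= (x *m M) 0 b) -> mu < rho.
Proof.
move=> Hirr Hsr rho0 x0 [c xc] [r xr] mu0 Hx.
rewrite real_ltNge ?ger0_real //; apply/negP => rmu.
have [N HQ] := Q_pos Hirr.
set Q := \sum_(k < N.+1) M ^+ k.
have QM : Q *m M = M *m Q.
  rewrite mulmxE mulr_suml mulr_sumr; apply: eq_bigr => k _.
  by rewrite -exprSr exprS.
have xcp : 0 < x 0 c by rewrite lt_def xc x0.
set y := x *m Q.
have ypos : forall b, 0 < y 0 b.
  move=> b; rewrite mxE; apply: (@sum_pos1 _ _ c).
    by move=> l; apply: mulr_ge0 (x0 l) (ltW (HQ l b)).
  exact: mulr_gt0.
set z := x *m M - mu *: x.
have z0 : forall b, 0 <= z 0 b.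
  by move=> b; rewrite /z mxE [X in _ + X]mxE [X in _ - X]mxE subr_ge0; exact: Hx.
have [zeq|zne] := eqVneq z 0.
  have xM : x *m M = mu *: x by apply/eqP; rewrite -subr_eq0 -/z zeq.
  have xMk : forall k, x *m M ^+ k = mu ^+ k *: x.
    elim=> [|k IH]; first by rewrite expr0 scale1r mulmx1.
    by rewrite exprSr -mulmxE mulmxA IH -scalemxAl xM scalerA -exprSr.
  have : y 0 r = 0.
    rewrite /y /Q mulmx_sumr summxE; apply: big1 => k _.
    by rewrite xMk mxE xr mulr0.
  by move=> h; move: (ypos r); rewrite h ltxx.
have [c' zc'] : exists c', z 0 c' != 0.
  apply/existsP; apply: contraNT zne => /existsPn H.
  apply/eqP/matrixP => i j; rewrite (ord1 i) [RHS]mxE.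
  by apply/eqP; move: (H j); rewrite negbK.
set w := z *m Q.
have wpos : forall b, 0 < w 0 b.
  move=> b; rewrite mxE; apply: (@sum_pos1 _ _ c').
    by move=> l; apply: mulr_ge0 (z0 l) (ltW (HQ l b)).
  by apply: mulr_gt0 => //; rewrite lt_def zc' z0.
have yM : y *m M = w + mu *: y.
  rewrite /y /w -mulmxA QM mulmxA /z mulmxBl -scalemxAl.
  by rewrite subrK.
set T := \sum_b (y 0 b / w 0 b).
have tpos : forall b, 0 < y 0 b / w 0 b by move=> b; apply: divr_gt0.
have T0 : 0 < T by apply: (@sum_pos1 _ _ c) => [b|]; [apply: ltW|].
set d := T^-1.
have d0 : 0 < d by rewrite invr_gt0.
have dyw : forall b, d * y 0 b <= w 0 b.
  move=> b.
  have -> : y 0 b = (y 0 b / w 0 b) * w 0 b by rewrite divfK // lt0r_neq0.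
  have H1 : (y 0 b / w 0 b) <= T by apply: le_sum1 => b'; apply: ltW.
  have H2 : d * ((y 0 b / w 0 b) * w 0 b) <= d * (T * w 0 b).
    by apply: ler_wpM2l; [apply: ltW | apply: ler_wpM2r => //; apply: ltW].
  apply: le_trans H2 _.
  by rewrite mulrA mulVf ?mul1r // lt0r_neq0.
set nu := mu + d.
have Hgrow : forall k b, nu ^+ k * y 0 b <= (y *m M ^+ k) 0 b.
  elim=> [|k IH] b; first by rewrite expr0 mul1r mulmx1.
  have -> : M ^+ k.+1 = M ^+ k *m M by rewrite exprSr.
  rewrite mulmxA [(_ *m M) 0 b]mxE.
  have H1 : \sum_c0 (nu ^+ k * y 0 c0) * M c0 b <= \sum_c0 (y *m M ^+ k) 0 c0 * M c0 b.
    by apply: ler_sum => c0 _; apply: ler_wpM2r.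
  apply: le_trans H1.
  have -> : \sum_c0 nu ^+ k * y 0 c0 * M c0 b = nu ^+ k * (y *m M) 0 b.
    by rewrite mxE mulr_sumr; apply: eq_bigr => c0 _; rewrite mulrA.
  rewrite exprSr -mulrA; apply: ler_wpM2l; first by apply: exprn_ge0; rewrite addr_ge0 // ltW.
  rewrite yM [in X in _ <= X]mxE [X in _ + X]mxE /nu mulrDl addrC.
  by apply: lerD; [|apply: dyw].
have nupos : rho < nu by apply: le_lt_trans rmu _; rewrite /nu ltrDl.
set R := (rho + nu) / 2.
have [rR Rnu] := midf_lt nupos.
have R0 : 0 < R by apply: le_lt_trans rho0 rR.
have [K [K0 HK]] := L1 R0 (fun l hl => le_lt_trans (Hsr l hl) rR).
set S := \sum_c0 y 0 c0.
have Hup : forall k, nu ^+ k * y 0 r <= S * K * R ^+ k.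
  move=> k0; apply: le_trans (Hgrow k0 r) _.
  rewrite mxE /S -mulrA mulr_suml; apply: ler_sum => c0 _.
  apply: ler_wpM2l; first exact: ltW.
  apply: le_trans (HK k0 c0 r); exact: real_ler_norm (ger0_real (exp_ge0 _ _ _)).
have s1 : 1 < nu / R by rewrite ltr_pdivlMr // mul1r.
have Spos : 0 <= S by apply: sumr_ge0 => b _; apply: ltW.
have [k Hk] := growth s1 (divr_ge0 (mulr_ge0 Spos K0) (ltW (ypos r))).
move: Hk; rewrite ltr_pdivrMr // => Hk.
have : S * K * R ^+ k < nu ^+ k * y 0 r.
  have -> : nu ^+ k = (nu / R) ^+ k * R ^+ k by rewrite -exprMn divfK // lt0r_neq0.
  by rewrite [X in _ < X]mulrAC ltr_pM2r // exprn_gt0.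
by move=> h; move: (lt_le_trans h (Hup k)); rewrite ltxx.
Qed.

Lemma sub_eig (rho : C) (T : {set 'I_n}) (i : 'I_n) l : irreducible M ->
  (forall l, eigenvalue M l -> `|l| <= rho) -> 0 <= rho -> i \notin T ->
  eigenvalue (subM M T T) l -> `|l| < rho.
Proof.
move=> Hirr Hsr rho0 iT /eigenvalueP [v vA vn0].
have [a0 va0] : exists a0, v 0 a0 != 0.
  apply/existsP; apply: contraNT vn0 => /existsPn H.
  apply/eqP/matrixP => p q; rewrite (ord1 p) [RHS]mxE.
  by apply/eqP; move: (H q); rewrite negbK.
have x0T := enum_valP a0.
set rk := enum_rank_in x0T.
pose xt := \row_c (if c \in T then `|v 0 (rk c)| else 0).
have xin : forall c, c \in T -> xt 0 c = `|v 0 (rk c)| by move=> c cT; rewrite mxE cT.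
have xout : forall c, c \notin T -> xt 0 c = 0 by move=> c cT; rewrite mxE (negbTE cT).
have xsum : forall b, (xt *m M) 0 b = \sum_a `|v 0 a| * M (enum_val a) b.
  move=> b; rewrite mxE.
  rewrite (eq_bigr (fun c => if c \in T then `|v 0 (rk c)| * M c b else 0)); last first.
    by move=> c _; rewrite mxE; case: ifP => _ //; rewrite mul0r.
  rewrite -big_mkcond big_enum_val /=; apply: eq_bigr => a _.
  by rewrite /rk enum_valK_in.
apply: (Klem (x := xt) Hirr Hsr rho0).
- by move=> c; rewrite mxE; case: ifP.
- exists (enum_val a0); rewrite xin //; rewrite /rk enum_valK_in.
  by rewrite normr_eq0.
- by exists i; rewrite xout.
- exact: normr_ge0.
move=> b; case: (boolP (b \in T)) => bT; last first.
  rewrite xout // mulr0 xsum; apply: sumr_ge0 => a _; apply: mulr_ge0 => //.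
rewrite xin // xsum -normrM.
have : (v *m subM M T T) 0 (rk b) = l * v 0 (rk b) by rewrite vA mxE.
move=> <-; rewrite mxE.
apply: le_trans (ler_norm_sum _ _ _) _; apply: ler_sum => a _.
rewrite normrM mxE /rk (enum_rankK_in x0T bT) (ger0_norm (M0 _ _)).
done.
Qed.

Lemma rho_pos (rho : C) : (2 <= n)%N -> irreducible M ->
  (forall l, eigenvalue M l -> `|l| <= rho) -> 0 <= rho -> 0 < rho.
Proof.
move=> n2 Hirr Hsr rho0.
have h0 : (0 < n)%N by apply: leq_trans n2.
pose c := Ordinal h0; pose r := Ordinal n2.
pose x := \row_b ((b == c)%:R : C).
apply: (Klem (x := x) Hirr Hsr rho0).
- by move=> b; rewrite mxE ler0n.
- by exists c; rewrite mxE eqxx oner_neq0.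
- by exists r; rewrite mxE.
- by [].
move=> b; rewrite mul0r mxE; apply: sumr_ge0 => a _; rewrite mxE; apply: mulr_ge0 => //.
Qed.

End PF.

Definition conv (u : nat -> C) (a : C) :=
  forall eps, 0 < eps -> exists L : nat, forall l, (L <= l)%N -> `|u l - a| < eps.

Lemma conv_ext (u v : nat -> C) a L0 : (forall l, (L0 <= l)%N -> u l = v l) ->
  conv v a -> conv u a.
Proof.
move=> Huv Hv eps e0; have [L HL] := Hv eps e0; exists (maxn L0 L) => l hl.
rewrite Huv; first by apply: HL; exact: leq_trans (leq_maxr _ _) hl.
exact: leq_trans (leq_maxl _ _) hl.
Qed.

Lemma conv_add (u v : nat -> C) a b : conv u a -> conv v b ->
  conv (fun l => u l + v l) (a + b).
Proof.
move=> Hu Hv eps e0.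
have e2 : 0 < eps / 2 by apply: divr_gt0.
have [L1 H1] := Hu _ e2; have [L2 H2] := Hv _ e2.
exists (maxn L1 L2) => l hl.
have -> : u l + v l - (a + b) = (u l - a) + (v l - b) by ring.
apply: le_lt_trans (ler_normD _ _) _.
have -> : eps = eps / 2 + eps / 2 by field.
apply: ltrD; [apply: H1; exact: leq_trans (leq_maxl _ _) hl
             |apply: H2; exact: leq_trans (leq_maxr _ _) hl].
Qed.

Lemma conv_const a : conv (fun _ => a) a.
Proof. by move=> eps e0; exists 0%N => l _; rewrite subrr normr0. Qed.

Lemma conv_sum (I : eqType) (r : seq I) (P : pred I) (u : I -> nat -> C) (a : I -> C) :
  (forall k, P k -> conv (u k) (a k)) ->
  conv (fun l => \sum_(k <- r | P k) u k l) (\sum_(k <- r | P k) a k).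
Proof.
move=> H; elim: r => [|x r IH].
  by apply: (conv_ext (v := fun _ => 0) (L0 := 0%N)) => [l _|]; rewrite ?big_nil //; apply: conv_const.
apply: (conv_ext (v := fun l => (if P x then u x l else 0) + \sum_(k <- r | P k) u k l) (L0 := 0%N)).
  by move=> l _; rewrite big_cons; case: (P x); rewrite ?add0r.
rewrite big_cons.
have -> : (if P x then a x + \sum_(j <- r | P j) a j else \sum_(j <- r | P j) a j)
   = (if P x then a x else 0) + \sum_(j <- r | P j) a j by case: (P x); rewrite ?add0r.
apply: conv_add => //.
by case Px: (P x); [apply: H | apply: conv_const].
Qed.

Lemma conv_geo (u : nat -> C) a K q L0 : 0 <= K -> 0 <= q -> q < 1 ->
  (forall l, (L0 <= l)%N -> `|u l - a| <= K * q ^+ l) -> conv u a.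
Proof.
move=> K0 q0 q1 Hu eps e0.
set q' := (q + 1) / 2.
have [qq' q'1] := midf_lt q1.
have q'0 : 0 < q' by apply: le_lt_trans q0 qq'.
have s1 : 1 < q'^-1 by rewrite invf_gt1.
have [k Hk] := growth s1 (divr_ge0 K0 (ltW e0)).
exists (maxn L0 k) => l hl.
apply: le_lt_trans (Hu l (leq_trans (leq_maxl _ _) hl)) _.
have H1 : K * q ^+ l <= K * q' ^+ k.
  apply: ler_wpM2l => //; apply: le_trans (@ler_wiXn2l _ q' (ltW q'0) (ltW q'1) _ _ (leq_trans (leq_maxr _ _) hl)).
  by apply: lerXn2r => //; rewrite ?nnegrE //; apply: ltW.
apply: le_lt_trans H1 _.
rewrite ltr_pdivrMr // exprVn in Hk.
have qk : 0 < q' ^+ k by apply: exprn_gt0.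
have : K * q' ^+ k < q' ^- k * eps * q' ^+ k by rewrite ltr_pM2r.
by rewrite mulrAC mulVf ?mul1r // expf_neq0 // lt0r_neq0.
Qed.


Lemma seq_le (rs : seq C) (F : C -> C) z : (forall w, w \in rs -> 0 <= F w) ->
  z \in rs -> F z <= \sum_(w <- rs) F w.
Proof.
elim: rs => // x rs IH H; rewrite inE big_cons => /orP [/eqP ->|zr].
  rewrite lerDl big_seq; apply: sumr_ge0 => w wr.
  by apply: H; rewrite inE wr orbT.
have H' : forall w, w \in rs -> 0 <= F w by move=> w wr; apply: H; rewrite inE wr orbT.
apply: le_trans (IH H' zr) _; rewrite lerDr; apply: H; by rewrite inE eqxx.
Qed.

Lemma inv_le (d t : C) : 0 < d -> d^-1 <= t -> t^-1 <= d.
Proof.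
move=> d0 dt.
have t0 : 0 < t by apply: lt_le_trans dt; rewrite invr_gt0.
by rewrite -[X in _ <= X](invrK d) lef_pV2 // posrE invr_gt0.
Qed.

Lemma prod_bound p m p' (X : 'M[C]_(p,m)) (E : 'M[C]_m) (Z : 'M[C]_(m,p')) a b e :
  (forall c d, `|E c d| <= e) ->
  `|(X *m (E *m Z)) a b| <= (\sum_c \sum_d `|X a c| * `|Z d b|) * e.
Proof.
move=> HE; rewrite mxE mulr_suml.
apply: le_trans (ler_norm_sum _ _ _) _; apply: ler_sum => c _.
rewrite mxE normrM mulr_suml.
apply: le_trans (ler_wpM2l (normr_ge0 _) (ler_norm_sum _ _ _)) _.
rewrite mulr_sumr; apply: ler_sum => d _.
rewrite normrM -mulrA.
apply: ler_wpM2l; first by apply: normr_ge0.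
rewrite [X in _ <= X]mulrC; apply: ler_wpM2r => //; exact: normr_ge0.
Qed.


Section Approx.
Variables (n : nat) (M : 'M[C]_n) (rho : C).
Hypothesis rho0 : 0 < rho.

Lemma choose_R (m : nat) (A : 'M[C]_m) : (forall l, eigenvalue A l -> `|l| < rho) ->
  exists R, [/\ 0 < R, R < rho & forall l, eigenvalue A l -> `|l| < R].
Proof.
move=> Heig.
have [rs Hrs] := closed_field_poly_normal (char_poly A).
rewrite (monicP (char_poly_monic A)) scale1r in Hrs.
have Hev : forall z, (z \in rs) = eigenvalue A z.
  by move=> z; rewrite eigenvalue_root_char Hrs root_prod_XsubC.
have Hpos : forall w, w \in rs -> 0 <= (rho - `|w|)^-1.
  by move=> w wr; rewrite invr_ge0 subr_ge0 ltW // Heig // -Hev.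
set E := \sum_(w <- rs) (rho - `|w|)^-1.
have E0 : 0 <= E by rewrite /E big_seq; apply: sumr_ge0 => w wr; apply: Hpos.
set D := (rho^-1 + E)^-1.
have D0 : 0 < D.
  rewrite invr_gt0; apply: (@lt_le_trans _ _ rho^-1); first by rewrite invr_gt0.
  by rewrite lerDl.
have Drho : D <= rho by apply: inv_le => //; rewrite lerDl.
have Dz : forall z, z \in rs -> D <= rho - `|z|.
  move=> z zr; apply: inv_le; first by rewrite subr_gt0 Heig // -Hev.
  apply: le_trans (seq_le Hpos zr) _; rewrite /E lerDr invr_ge0; exact: ltW.
exists (rho - D / 2); split.
- rewrite subr_gt0; apply: lt_le_trans Drho; rewrite ltr_pdivrMr // ltr_pMr //.
  by rewrite ltr1n.
- by rewrite ltrBlDr ltrDl divr_gt0.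
- move=> l hl; rewrite -Hev in hl.
  apply: le_lt_trans (_ : `|l| <= rho - D) _.
    by rewrite lerBrDr -lerBrDl Dz.
  by rewrite ltrD2l ltrN2 ltr_pdivrMr // ltr_pMr // ltr1n.
Qed.

Lemma exprZ_mx (m : nat) (c : C) (X : 'M[C]_m) k : (c *: X) ^+ k = c ^+ k *: X ^+ k.
Proof.
elim: k => [|k IH]; first by rewrite !expr0 scale1r.
rewrite !exprSr IH -!mulmxE -scalemxAl -scalemxAr scalerA.
by [].
Qed.

Lemma decay (m : nat) (A : 'M[C]_m) : (forall l, eigenvalue A l -> `|l| < rho) ->
  exists K q, [/\ 0 <= K, 0 <= q, q < 1 &
    forall k a b, `|((rho^-1 *: A) ^+ k) a b| <= K * q ^+ k].
Proof.
move=> Heig; have [R [R0 Rr HR]] := choose_R Heig.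
have [K [K0 HK]] := L1 R0 HR.
exists K, (R / rho); split => //.
- by apply: divr_ge0; apply: ltW.
- by rewrite ltr_pdivrMr // mul1r.
move=> k a b; rewrite exprZ_mx mxE normrM exprMn mulrCA.
rewrite normrX normfV (gtr0_norm rho0) exprVn mulrC.
rewrite [X in _ <= X]mulrCA [X in _ <= X]mulrA.
apply: ler_wpM2r; first by rewrite invr_ge0 exprn_ge0 // ltW.
exact: HK.
Qed.

Lemma neumann (m : nat) (A : 'M[C]_m) l : (A - rho%:M) \in unitmx ->
  rho^-1 *: \sum_(k < l.+1) (rho^-1 *: A) ^+ k
    = ((rho^-1 *: A) ^+ l.+1 - 1) *m invmx (A - rho%:M).
Proof.
move=> uA; set B := rho^-1 *: A.
have HAB : A - rho%:M = rho *: (B - 1).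
  by rewrite scalerBr scalerA divff ?lt0r_neq0 // scale1r scalemx1.
have tel : (\sum_(k < l.+1) B ^+ k) * (B - 1) = B ^+ l.+1 - 1.
  rewrite mulr_suml.
  rewrite (eq_bigr (fun k : 'I_l.+1 => B ^+ k.+1 - B ^+ k)); last first.
    by move=> k _; rewrite mulrBr mulr1 -exprSr.
  rewrite -(big_mkord xpredT (fun k => B ^+ k.+1 - B ^+ k)).
  by rewrite telescope_sumr // expr0.
rewrite -[LHS](mulmxK uA); congr (_ *m _).
rewrite HAB -scalemxAl -scalemxAr scalerA mulVf ?lt0r_neq0 // scale1r mulmxE.
exact: tel.
Qed.

Lemma Gamma_full l (i j : 'I_n) : (2 * n <= l)%N -> Gamma M l i j = setT.
Proof.
move=> hl; apply/setP => k; rewrite !inE.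
have dle : forall a b, (dist M a b <= n)%N.
  by move=> a b; rewrite /dist; have := find_size (fun k => walk M k a b) (iota 0 n); rewrite size_iota.
have H2 : forall a b c, (dist M a b + dist M b c <= l)%N.
  move=> a b c; apply: leq_trans hl; rewrite mul2n -addnn; exact: leq_add.
by rewrite !H2.
Qed.

Hypothesis M0 : forall i j, 0 <= M i j.
Hypothesis Hirr : irreducible M.
Hypothesis Hsr : forall l, eigenvalue M l -> `|l| <= rho.

Lemma pair_conv (i j a b : 'I_n) (Ha : a \in [set i; j]) (Hb : b \in [set i; j]) :
  conv (fun l => at2 Ha Hb (iso_l M rho l i j)) (at2 Ha Hb (iso M rho [set i; j])).
Proof.
set S := [set i; j].
set T := ~: S.
set A := subM M T T.
have iT : i \notin T by rewrite inE negbK set21.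
have Heig : forall l, eigenvalue A l -> `|l| < rho.
  by move=> l; apply: (sub_eig M0 Hirr Hsr (ltW rho0) iT).
have uA : (A - rho%:M) \in unitmx.
  rewrite -row_free_unit -kermx_eq0; apply: contraT => h.
  have : eigenvalue A rho by [].
  by move/Heig; rewrite gtr0_norm // ltxx.
have [K [q [K0 q0 q1 HK]]] := decay Heig.
set W := invmx (A - rho%:M).
set X := subM M S T.
set Y := subM M T S.
have eq_l : forall l, (2 * n <= l)%N ->
    iso_l M rho l i j = iso M rho S + X *m ((rho^-1 *: A) ^+ l.+1 *m (W *m Y)).
  move=> l hl; rewrite /iso_l (Gamma_full i j hl) setTD -/S -/T.
  rewrite -/A -/X -/Y scalemxAl scalemxAr (neumann l uA) -/W /iso -/X -/Y -/A -/W.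
  rewrite mulmxBl mul1mx mulmxBr mulmxBl !mulmxA.
  by rewrite [_ - X *m W *m Y]addrC addrA.
apply: (@conv_geo _ _ ((\sum_c \sum_d `|X (enum_rank_in Ha a) c| * `|(W *m Y) d (enum_rank_in Hb b)|) * K) q (2 * n)%N).
- by apply: mulr_ge0 => //; apply: sumr_ge0 => c _; apply: sumr_ge0 => d _; apply: mulr_ge0.
- exact: q0.
- exact: q1.
move=> l hl; rewrite (eq_l l hl) /at2 mxE addrC addrK.
apply: le_trans (prod_bound _ _ _ _ (fun c d => HK l.+1 c d)) _.
rewrite -mulrA; apply: ler_wpM2l.
  by apply: sumr_ge0 => c _; apply: sumr_ge0 => d _; apply: mulr_ge0.
apply: ler_wpM2l => //; rewrite exprSr; apply: ler_piMr; [exact: exprn_ge0 | exact: ltW].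
Qed.

End Approx.


Section Mono.
Variable n : nat.

Definition Pm (U : {set 'I_n}) : 'M[C]_n := \matrix_(a, b) ((a == b) && (a \in U))%:R.

Lemma mulP (X : 'M[C]_n) U x d : (X *m Pm U) x d = if d \in U then X x d else 0.
Proof.
rewrite mxE (bigD1 d) //= big1 => [|e ne]; last by rewrite mxE (negbTE ne) mulr0.
by rewrite mxE eqxx /=; case: (d \in U); rewrite ?mulr1 ?mulr0 addr0.
Qed.

Lemma subM_mul (X Y : 'M[C]_n) S U T :
  subM X S U *m subM Y U T = subM (X *m Pm U *m Y) S T.
Proof.
apply/matrixP => a b; rewrite !mxE.
rewrite (eq_bigr (fun d => if d \in U then X (enum_val a) d * Y d (enum_val b) else 0)); last first.
  by move=> d _; rewrite mulP; case: ifP; rewrite ?mul0r.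
rewrite -big_mkcond [RHS]big_enum_val /=; apply: eq_bigr => c _; by rewrite !mxE.
Qed.

Lemma subM_one U : subM (1 : 'M[C]_n) U U = 1.
Proof.
by apply/matrixP => a b; rewrite !mxE (inj_eq (@enum_val_inj _ _)).
Qed.

Lemma subM_exp (X : 'M[C]_n) U k : (subM X U U) ^+ k = subM ((X *m Pm U) ^+ k) U U.
Proof.
elim: k => [|k IH]; first by rewrite !expr0 subM_one.
by rewrite !exprS IH -mulmxE subM_mul.
Qed.

Lemma subM_scale c (X : 'M[C]_n) S T : c *: subM X S T = subM (c *: X) S T.
Proof. by apply/matrixP => a b; rewrite !mxE. Qed.

Lemma subM_add (X Y : 'M[C]_n) S T : subM X S T + subM Y S T = subM (X + Y) S T.
Proof. by apply/matrixP => a b; rewrite !mxE. Qed.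

Lemma subM_sum N (F : nat -> 'M[C]_n) U :
  \sum_(k < N) subM (F k) U U = subM (\sum_(k < N) F k) U U.
Proof. by apply/matrixP => a b; rewrite !mxE !summxE; apply: eq_bigr => k _; rewrite mxE. Qed.

Definition nn (X : 'M[C]_n) := forall a b, 0 <= X a b.
Definition lem (X Y : 'M[C]_n) := forall a b, X a b <= Y a b.

Lemma nn_mul X Y : nn X -> nn Y -> nn (X *m Y).
Proof. by move=> hX hY a b; rewrite mxE; apply: sumr_ge0 => c _; apply: mulr_ge0. Qed.

Lemma lem_mul X X' Y Y' : nn X -> lem X X' -> nn Y -> lem Y Y' -> lem (X *m Y) (X' *m Y').
Proof.
move=> hX hXX hY hYY a b; rewrite !mxE; apply: ler_sum => c _.
by apply: ler_pM.
Qed.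

Lemma nn_lem X Y : nn X -> lem X Y -> nn Y.
Proof. by move=> hX h a b; apply: le_trans (hX a b) (h a b). Qed.

Lemma nn_P U : nn (Pm U).
Proof. by move=> a b; rewrite mxE ler0n. Qed.

Lemma lem_P (U V : {set 'I_n}) : U \subset V -> lem (Pm U) (Pm V).
Proof.
move=> /subsetP UV a b; rewrite !mxE; case: (a == b) => //=.
by case aU: (a \in U); rewrite ?(UV _ aU) ?ler0n.
Qed.

Lemma lem_addl Z X Y : lem X Y -> lem (Z + X) (Z + Y).
Proof. by move=> h a b; rewrite !mxE lerD2l. Qed.

Lemma lem_refl X : lem X X. Proof. by []. Qed.

Lemma nn_exp X k : nn X -> nn (X ^+ k).
Proof.
move=> hX; elim: k => [|k IH]; first by move=> a b; rewrite expr0 mxE ler0n.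
by rewrite exprSr -mulmxE; apply: nn_mul.
Qed.

Lemma lem_exp X Y k : nn X -> lem X Y -> lem (X ^+ k) (Y ^+ k).
Proof.
move=> hX hXY; elim: k => [|k IH]; first by [].
rewrite !exprSr -!mulmxE; apply: lem_mul => //; exact: nn_exp.
Qed.

Lemma nn_scale c X : 0 <= c -> nn X -> nn (c *: X).
Proof. by move=> c0 hX a b; rewrite mxE mulr_ge0. Qed.

Lemma lem_scale c X Y : 0 <= c -> lem X Y -> lem (c *: X) (c *: Y).
Proof. by move=> c0 h a b; rewrite !mxE ler_wpM2l. Qed.

Lemma nn_sum N (F : nat -> 'M[C]_n) : (forall k, nn (F k)) -> nn (\sum_(k < N) F k).
Proof. by move=> h a b; rewrite summxE; apply: sumr_ge0 => k _; apply: h. Qed.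

Lemma lem_sum N (F G : nat -> 'M[C]_n) : (forall k, nn (G k)) -> (forall k, lem (F k) (G k)) ->
  lem (\sum_(k < N) F k) (\sum_(k < N.+1) G k).
Proof.
move=> hG h a b; rewrite big_ord_recr /= mxE !summxE.
apply: le_trans (_ : _ <= \sum_(k < N) G k a b) _.
  by apply: ler_sum => k _; apply: h.
by rewrite lerDl; apply: hG.
Qed.

End Mono.


Lemma iso_l_full (n : nat) (M : 'M[C]_n) rho l (i j a b : 'I_n)
  (Ha : a \in [set i; j]) (Hb : b \in [set i; j]) :
  let U := Gamma M l i j :\: [set i; j] in
  at2 Ha Hb (iso_l M rho l i j) =
  (M + rho^-1 *: (M *m Pm U *m (\sum_(k < l.+1) ((rho^-1 *: M) *m Pm U) ^+ k)
                  *m Pm U *m M)) a b.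
Proof.
move=> U; rewrite /at2 /iso_l -/U.
under eq_bigr => k _ do rewrite subM_scale subM_exp.
rewrite (@subM_sum _ _ (fun k => ((rho^-1 *: M) *m Pm U) ^+ k)).
rewrite !subM_mul subM_scale subM_add mxE.
by rewrite !enum_rankK_in.
Qed.

Lemma Gamma_mono (n : nat) (M : 'M[C]_n) l (i j : 'I_n) :
  Gamma M l i j \subset Gamma M l.+1 i j.
Proof.
apply/subsetP => k; rewrite !inE => /orP [/andP [h1 h2]|->]; last by rewrite orbT.
by rewrite (leq_trans h1 (leqnSn _)) (leq_trans h2 (leqnSn _)).
Qed.

Lemma iso_l_mono (n : nat) (M : 'M[C]_n) rho l (i j a b : 'I_n)
  (Ha : a \in [set i; j]) (Hb : b \in [set i; j]) :
  (forall i j, 0 <= M i j) -> 0 <= rho ->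
  at2 Ha Hb (iso_l M rho l i j) <= at2 Ha Hb (iso_l M rho l.+1 i j).
Proof.
move=> M0 rho0; rewrite !iso_l_full.
set U := Gamma M l i j :\: [set i; j].
set V := Gamma M l.+1 i j :\: [set i; j].
have UV : U \subset V by apply: setSD; apply: Gamma_mono.
have r0 : 0 <= rho^-1 by rewrite invr_ge0.
have nM : nn M by [].
have nNU : nn ((rho^-1 *: M) *m Pm U) by apply: nn_mul; [apply: nn_scale|apply: nn_P].
have lN : lem ((rho^-1 *: M) *m Pm U) ((rho^-1 *: M) *m Pm V).
  by apply: lem_mul; [apply: nn_scale | apply: lem_refl | apply: nn_P | apply: lem_P].
have nNV : nn ((rho^-1 *: M) *m Pm V) by apply: nn_lem lN.
set N1 := (rho^-1 *: M) *m Pm U in nNU lN *.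
set N2 := (rho^-1 *: M) *m Pm V in nNV lN *.
have nZ : nn (\sum_(k < l.+1) N1 ^+ k) by apply: nn_sum => k; apply: nn_exp.
have lZ : lem (\sum_(k < l.+1) N1 ^+ k) (\sum_(k < l.+2) N2 ^+ k).
  by apply: lem_sum => k; [apply: nn_exp | apply: lem_exp].
have lP := lem_P UV.
have nPU := nn_P U.
have nMU : nn (M *m Pm U) by apply: nn_mul.
have H1 : lem (M *m Pm U) (M *m Pm V).
  by apply: lem_mul; [exact: nM | exact: lem_refl | exact: nPU | exact: lP].
have nMUZ : nn (M *m Pm U *m (\sum_(k < l.+1) N1 ^+ k)) by apply: nn_mul.
have H2 : lem (M *m Pm U *m (\sum_(k < l.+1) N1 ^+ k)) (M *m Pm V *m (\sum_(k < l.+2) N2 ^+ k)).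
  by apply: lem_mul; [exact: nMU | exact: H1 | exact: nZ | exact: lZ].
have nMUZP : nn (M *m Pm U *m (\sum_(k < l.+1) N1 ^+ k) *m Pm U) by apply: nn_mul.
have H3 : lem (M *m Pm U *m (\sum_(k < l.+1) N1 ^+ k) *m Pm U)
              (M *m Pm V *m (\sum_(k < l.+2) N2 ^+ k) *m Pm V).
  by apply: lem_mul; [exact: nMUZ | exact: H2 | exact: nPU | exact: lP].
have H4 : lem (M *m Pm U *m (\sum_(k < l.+1) N1 ^+ k) *m Pm U *m M)
              (M *m Pm V *m (\sum_(k < l.+2) N2 ^+ k) *m Pm V *m M).
  by apply: lem_mul; [exact: nMUZP | exact: H3 | exact: nM | exact: lem_refl].
exact: (lem_addl M (lem_scale r0 H4)) a b.
Qed.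

End Aux.

Theorem theorem2 (C : archiClosedFieldType) (n : nat) (M : 'M[C]_n) (rho : C) :
  (3 <= n)%N ->
  (forall i j, 0 <= M i j) ->
  irreducible M ->
  spectral_radius M rho ->
  (forall (i j : 'I_n) (eps : C), 0 < eps ->
     exists L : nat, forall l : nat, (L <= l)%N ->
       `|eff_l M rho l i j - eff M rho i j| < eps)
  /\
  (forall l : nat, (1 <= l)%N -> forall i j : 'I_n,
     eff_l M rho l i j <= eff_l M rho l.+1 i j).
Proof.
move=> n3 M0 Hirr [[l0 _ hl0] Hsr].
have rho0 : 0 <= rho by rewrite -hl0 normr_ge0.
have n2 : (2 <= n)%N by apply: leq_trans n3.
have rhopos : 0 < rho := rho_pos M0 n2 Hirr Hsr rho0.
split.
  move=> i j eps e0.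
  suff Hc : conv (fun l => eff_l M rho l i j) (eff M rho i j) by exact: Hc eps e0.
  rewrite /eff_l /eff mxE.
  apply: (conv_ext (L0 := 0%N)) => [l _|]; first by rewrite mxE.
  case: (i == j).
    apply: conv_sum => k _.
    exact: pair_conv.
  exact: pair_conv.
move=> l _ i j; rewrite /eff_l !mxE; case: (i == j).
  by apply: ler_sum => k _; apply: iso_l_mono.
exact: iso_l_mono.
Qed.
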